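(* Let $d$ be a circular design with $t$ treatments and $b$ blocks of length $k$. (i) If $l^*$ maximizes $c(l)$ over all sequences $l$ of length $k$ with entries in $\{1,\dots,t\}$, then under model $(\mathcal{M}1)$, $\mathrm{tr}(C_d[\phi])\le b\,c(l^* )$. (ii) If $l^*$ maximizes $\tilde c(l)$ over all such sequences, then under model $(\mathcal{M}2)$, $\mathrm{tr}(C_d[\psi])\le b\,\tilde c(l^* )$.
   Context: Designs: $t$ treatments, $b$ linear blocks; block $i$ has inner plots $j=1,\dots,k$ and border plots $j=0,k+1$; $d(i,j)$ is the treatment on plot $(i,j)$, and circularity means $d(i,0)=d(i,k)$, $d(i,k+1)=d(i,1)$. Responses $Y_{i,j}$ ($1\le i\le b$, $1\le j\le k$) are uncorrelated with common variance. Model $(\mathcal{M}1)$: $\mathbb{E}(Y)=B\beta+T_d\tau+L_d\lambda$; model $(\mathcal{M}2)$: $\mathbb{E}(Y)=B\beta+T_d\tau+L_d\lambda+R_d\rho$, where $B$ is the block incidence matrix and $T_d,L_d,R_d$ ($bk\times t$) have in row $(i,j)$ a single $1$ in column $d(i,j)$, $d(i,j-1)$, $d(i,j+1)$ respectively. Total effects: $\phi=\tau+\lambda$ in $(\mathcal{M}1)$, $\psi=\tau+\lambda+\rho$ in $(\mathcal{M}2)$; these equal $K'\alpha$ with $\alpha=(\tau',\lambda')'$, $K=\mathbf{1}_2\otimes I_t$, $A=(T_d\mid L_d)$, respectively $\alpha=(\tau',\lambda',\rho')'$, $K=\mathbf 1_3\otimes I_t$, $A=(T_d\mid L_d\mid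 R_d)$. Information matrix: with $A^+$ the Moore–Penrose inverse, $\mathrm{pr}_{(X)}=X(X'X)^+X'$, $\mathrm{pr}^\perp_{(X)}=I-\mathrm{pr}_{(X)}$, $M=I-K(K'K)^+K'$, $X_1=AK(K'K)^+$, $X_2=(AM\mid B)$, the information matrix for $K'\alpha$ is $X_1'\mathrm{pr}^\perp_{(X_2)}X_1$; this gives $C_d[\phi]$ and $C_d[\psi]$. For a sequence $l=(l_1,\dots,l_k)$ with entries in $\{1,\dots,t\}$, put $l_0=l_k$, $l_{k+1}=l_1$; $n_i$ = number of occurrences of $i$ in $l$; $m_i$ = number of $j\in\{1,\dots,k\}$ with $l_{j-1}=l_j=i$; $p_i$ = number of $j\in\{1,\dots,k\}$ with $l_{j-1}=l_{j+1}=i$. Define $c(l)=\frac12\big(k-\frac2k\sum_i n_i^2+\sum_i m_i\big)$ and $\tilde c(l)=\frac19\big(3k-\frac9k\sum_i n_i^2+4\sum_i m_i+2\sum_i p_i\big)$. *)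

(* Defs.v *)
From HB Require Import structures.
From mathcomp Require Import all_boot all_order all_algebra.
From Stdlib Require Import ClassicalEpsilon.
Set Implicit Arguments. Unset Strict Implicit. Unset Printing Implicit Defensive.
Import Order.TTheory GRing.Theory Num.Theory.
Local Open Scope ring_scope.

Section Defs.
Variable R : realFieldType.

Definition penrose m n (A : 'M[R]_(m, n)) (G : 'M[R]_(n, m)) : Prop :=
  [/\ A *m G *m A = A, G *m A *m G = G, (A *m G)^T = A *m G & (G *m A)^T = G *m A].

Definition mpinv m n (A : 'M[R]_(m, n)) : 'M[R]_(n, m) :=
  match excluded_middle_informative (exists G, penrose A G) with
  | left e => proj1_sig (constructive_indefinite_description _ e)
  | right _ => 0
  end.

Definition pr m n (X : 'M[R]_(m, n)) : 'M[R]_m := X *m mpinv (X^T *m X) *m X^T.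
Definition prp m n (X : 'M[R]_(m, n)) : 'M[R]_m := 1%:M - pr X.

(* Information matrix for K' alpha in E(Y) = B beta + A alpha *)
Definition info_mx N p t b (A : 'M[R]_(N, p)) (K : 'M[R]_(p, t)) (B : 'M[R]_(N, b))
  : 'M[R]_t :=
  let M := 1%:M - K *m mpinv (K^T *m K) *m K^T in
  let X1 := A *m K *m mpinv (K^T *m K) in
  let X2 := row_mx (A *m M) B in
  X1^T *m prp X2 *m X1.
End Defs.

(* Plots: row r of the (b*k)-dimensional response vector is plot (r / k, r mod k). *)
Lemma blk_subproof b k (r : 'I_(b * k)) : (r %/ k < b)%N.
Proof.
case: r => r /=; case: k => [|k]; first by rewrite muln0.
by rewrite ltn_divLR.
Qed.
Lemma pos_subproof b k (r : 'I_(b * k)) : (r %% k < k)%N.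
Proof.
case: r => r /=; case: k => [|k]; first by rewrite muln0.
by rewrite ltn_pmod.
Qed.
Definition blk b k (r : 'I_(b * k)) : 'I_b := Ordinal (blk_subproof r).
Definition pos b k (r : 'I_(b * k)) : 'I_k := Ordinal (pos_subproof r).

(* A circular design: d i j is the treatment on inner plot (i,j) (0-based);
   circularity: left neighbour of plot j is plot (j-1 mod k), right is (j+1 mod k). *)
Definition design t b k := 'I_b -> 'I_k -> 'I_t.

Section Mats.
Variables (R : realFieldType) (t b k : nat) (d : design t b k).
Local Open Scope ring_scope.
Definition Bmx : 'M[R]_(b * k, b) := \matrix_(r, i) ((blk r == i)%:R).
Definition Tmx : 'M[R]_(b * k, t) := \matrix_(r, c) ((d (blk r) (pos r) == c)%:R).
Definition Lmx : 'M[R]_(b * k, t) :=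
  \matrix_(r, c) ((d (blk r) (ord_pred (pos r)) == c)%:R).
Definition Rmx : 'M[R]_(b * k, t) :=
  \matrix_(r, c) ((d (blk r) (ordS (pos r)) == c)%:R).

(* model M1: alpha = (tau', lambda')', K = 1_2 (x) I_t *)
Definition C_phi : 'M[R]_t :=
  info_mx (row_mx Tmx Lmx) (col_mx (1%:M : 'M[R]_t) 1%:M) Bmx.
(* model M2: alpha = (tau', lambda', rho')', K = 1_3 (x) I_t *)
Definition C_psi : 'M[R]_t :=
  info_mx (row_mx (row_mx Tmx Lmx) Rmx)
          (col_mx (col_mx (1%:M : 'M[R]_t) 1%:M) 1%:M) Bmx.
End Mats.

(* Sequences l = (l_1..l_k), stored 0-based; l_0 = l_k, l_{k+1} = l_1 via cyclic pred/succ. *)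
Section Seqs.
Variables (t k : nat) (l : k.-tuple 'I_t).
Definition nocc (i : 'I_t) : nat := count_mem i l.
Definition mocc (i : 'I_t) : nat :=
  #|[set j : 'I_k | (tnth l (ord_pred j) == i) && (tnth l j == i)]|.
Definition pocc (i : 'I_t) : nat :=
  #|[set j : 'I_k | (tnth l (ord_pred j) == i) && (tnth l (ordS j) == i)]|.

Local Open Scope ring_scope.
Definition cval (R : realFieldType) : R :=
  2^-1 * (k%:R - 2 / k%:R * (\sum_i (nocc i)%:R ^+ 2) + \sum_i (mocc i)%:R).
Definition ctval (R : realFieldType) : R :=
  9^-1 * (3 * k%:R - 9 / k%:R * (\sum_i (nocc i)%:R ^+ 2)
          + 4 * \sum_i (mocc i)%:R + 2 * \sum_i (pocc i)%:R).
End Seqs.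

(* Main.v *)
Require Import Defs.
From HB Require Import structures.
From mathcomp Require Import all_boot all_order all_algebra.
From mathcomp Require Import zify ring lra.
From Stdlib Require Import ClassicalEpsilon.
Import Order.TTheory GRing.Theory Num.Theory.
Local Open Scope ring_scope.
Set Implicit Arguments. Unset Strict Implicit. Unset Printing Implicit Defensive.

Section MP.
Variable R : realFieldType.

Lemma tr_tmul_ge0 m n (W : 'M[R]_(m, n)) : 0 <= \tr (W *m W^T).
Proof.
rewrite /mxtrace; apply: sumr_ge0 => i _; rewrite !mxE; apply: sumr_ge0 => j _.
by rewrite mxE -expr2 sqr_ge0.
Qed.

Lemma gram0 m n (W : 'M[R]_(m, n)) : W *m W^T = 0 -> W = 0.
Proof.
move=> H; apply/matrixP => i j; rewrite mxE.
have := congr1 (fun M : 'M[R]_m => M i i) H; rewrite !mxE => /psumr_eq0P Hs.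
apply/eqP; rewrite -sqrf_eq0 expr2; apply/eqP.
have := Hs _ j isT; rewrite mxE -expr2; apply => l _; by rewrite mxE -expr2 sqr_ge0.
Qed.

Lemma gram_unit r n (F : 'M[R]_(r, n)) : row_free F -> F *m F^T \in unitmx.
Proof.
move=> fF; rewrite -row_free_unit -kermx_eq0; apply/eqP.
set K := kermx _.
have HK : K *m (F *m F^T) = 0 by apply/sub_kermxP.
have : (K *m F) *m (K *m F)^T = 0 by rewrite trmx_mul !mulmxA -(mulmxA K) HK mul0mx.
move/gram0/eqP; rewrite mulmx_free_eq0 //; by move/eqP.
Qed.

Lemma penrose_exists m n (A : 'M[R]_(m, n)) : exists G, penrose A G.
Proof.
have fC : row_free (col_base A)^T by rewrite /row_free mxrank_tr; exact: col_base_full.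
move: (col_base A) (row_base A) (mulmx_base A) fC (row_base_free A) => C F eA fC fF.
rewrite -eA.
have hC := gram_unit fC; rewrite trmxK in hC.
have hF := gram_unit fF.
set U := invmx (F *m F^T); set V := invmx (C^T *m C).
exists (F^T *m U *m V *m C^T).
have UT : U^T = U by rewrite /U trmx_inv trmx_mul trmxK.
have VT : V^T = V by rewrite /V trmx_inv trmx_mul trmxK.
have eAG : C *m F *m (F^T *m U *m V *m C^T) = C *m V *m C^T.
  by rewrite !mulmxA -(mulmxA C F F^T) -(mulmxA C _ U) mulmxV // mulmx1.
have eGA : (F^T *m U *m V *m C^T) *m (C *m F) = F^T *m U *m F.
  by rewrite !mulmxA -(mulmxA _ C^T C) -(mulmxA _ V (C^T *m C)) mulVmx // mulmx1.
split.
- by rewrite eAG !mulmxA -(mulmxA _ C^T C) -(mulmxA C V) mulVmx // mulmx1.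
- by rewrite eGA !mulmxA -(mulmxA _ F F^T) -(mulmxA _ (F *m F^T) U) mulmxV // mulmx1.
- by rewrite eAG !trmx_mul trmxK VT mulmxA.
- by rewrite eGA !trmx_mul trmxK UT mulmxA.
Qed.

Lemma mpinvP m n (A : 'M[R]_(m, n)) : penrose A (mpinv A).
Proof.
rewrite /mpinv; case: excluded_middle_informative => [e|[]]; last exact: penrose_exists.
exact: proj2_sig (constructive_indefinite_description _ e).
Qed.

Lemma mulGS_id N q (X : 'M[R]_(N, q)) (H : 'M[R]_q) :
  (X^T *m X) *m H *m (X^T *m X) = X^T *m X -> X *m H *m (X^T *m X) = X.
Proof.
move=> h; set S := X^T *m X.
have hS : S *m (H *m S - 1%:M) = 0 by rewrite mulmxBr mulmxA h mulmx1 subrr.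
have := @gram0 _ _ (X *m (H *m S - 1%:M))^T; rewrite trmxK.
have -> : (X *m (H *m S - 1%:M))^T *m (X *m (H *m S - 1%:M)) = 0.
  by rewrite trmx_mul -mulmxA (mulmxA X^T) -/S hS mulmx0.
move=> /(_ erefl) /eqP; rewrite trmx_eq0 mulmxBr mulmx1 subr_eq0 mulmxA.
by move/eqP.
Qed.

Lemma pr_props N q (X : 'M[R]_(N, q)) :
  [/\ (pr X)^T = pr X, pr X *m pr X = pr X & pr X *m X = X].
Proof.
have [h1 _ _ _] := mpinvP (X^T *m X).
have h1' : (X^T *m X) *m (mpinv (X^T *m X))^T *m (X^T *m X) = X^T *m X.
  by have := congr1 trmx h1; rewrite !trmx_mul !trmxK mulmxA.
have e1 := mulGS_id h1; have e2 := mulGS_id h1'.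
have PX : pr X *m X = X by rewrite /pr -mulmxA e1.
have PTX : (pr X)^T *m X = X.
  rewrite /pr !trmx_mul trmxK (mulmxA X) -mulmxA. exact: e2.
have PP : pr X *m pr X = pr X by rewrite {1}/pr !mulmxA PX.
have PTP : (pr X)^T *m pr X = pr X by rewrite {2}/pr !mulmxA PTX.
split=> //.
by rewrite -PTP trmx_mul trmxK PTP.
Qed.

Lemma tr_tmul_ge0' m n (W : 'M[R]_(m, n)) : 0 <= \tr (W^T *m W).
Proof. by have := tr_tmul_ge0 W^T; rewrite trmxK. Qed.

Lemma proj_le N p (P Q : 'M[R]_N) (Y : 'M[R]_(N, p)) :
  P^T = P -> P *m P = P -> Q^T = Q -> Q *m Q = Q -> P *m Q = Q ->
  \tr (Y^T *m (1%:M - P) *m Y) <= \tr (Y^T *m (1%:M - Q) *m Y).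
Proof.
move=> PT PP QT QQ PQ.
have QP : Q *m P = Q by rewrite -{1}QT -PT -trmx_mul PQ QT.
rewrite -subr_ge0 -linearB /= -mulmxBl -mulmxBr.
have -> : (1%:M - Q) - (1%:M - P) = P - Q by rewrite opprB addrC addrA subrK.
have -> : P - Q = (P - Q)^T *m (P - Q).
  have -> : (P - Q)^T = P - Q by rewrite linearB /= PT QT.
  by rewrite mulmxBl !mulmxBr PP PQ QP QQ opprB addrA subrK.
by rewrite mulmxA -trmx_mul -mulmxA tr_tmul_ge0'.
Qed.
End MP.

Lemma hrow_subproof b k (i : 'I_b) (j : 'I_k) : (i * k + j < b * k)%N.
Proof. case: i j => [i hi] [j hj] /=; nia. Qed.
Definition hrow b k (p : 'I_b * 'I_k) : 'I_(b * k) := Ordinal (hrow_subproof p.1 p.2).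

Lemma blk_hrow b k p : blk (@hrow b k p) = p.1.
Proof.
case: p => [[i hi] [j hj]]; apply/val_inj => /=.
rewrite divnDl ?dvdn_mull // mulnK; last by case: k hj => //.
by rewrite divn_small // addn0.
Qed.
Lemma pos_hrow b k p : pos (@hrow b k p) = p.2.
Proof.
case: p => [[i hi] [j hj]]; apply/val_inj => /=.
by rewrite modnMDl modn_small.
Qed.
Lemma hrow_blk b k r : hrow (@blk b k r, pos r) = r.
Proof. by apply/val_inj => /=; rewrite -divn_eq. Qed.

Section Sums.
Variable R : realFieldType.
Lemma sum_rows b k (F : 'I_b -> 'I_k -> R) :
  \sum_(r < b * k) F (blk r) (pos r) = \sum_i \sum_j F i j.
Proof.
rewrite pair_bigA /= (reindex (@hrow b k)) /=.
  by apply: eq_bigr => -[i j] _; rewrite blk_hrow pos_hrow.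
exists (fun r => (blk r, pos r)) => [p _|r _]; last exact: hrow_blk.
by rewrite blk_hrow pos_hrow; case: p.
Qed.

Lemma BtB b k : (Bmx R b k)^T *m Bmx R b k = (k%:R : R)%:M.
Proof.
apply/matrixP => i i'; rewrite !mxE.
under eq_bigr do rewrite !mxE.
rewrite (sum_rows (fun x _ => ((x == i)%:R * (x == i')%:R : R))) /=.
rewrite (bigD1 i) //= [X in _ + X]big1 => [|x /negbTE xi]; last by apply: big1 => j _; rewrite xi mul0r.
rewrite eqxx addr0 sumr_const card_ord mul1r.
by case: (i == i'); rewrite ?mulr1n ?mulr0n ?mul0rn.
Qed.

Definition Qmx b k : 'M[R]_(b * k) := (k%:R^-1 : R) *: (Bmx R b k *m (Bmx R b k)^T).

Lemma Q_props b k : (0 < k)%N ->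
  [/\ (Qmx b k)^T = Qmx b k, Qmx b k *m Qmx b k = Qmx b k &
      forall P : 'M[R]_(b * k), P *m Bmx R b k = Bmx R b k -> P *m Qmx b k = Qmx b k].
Proof.
move=> k0; split.
- by rewrite /Qmx linearZ /= trmx_mul trmxK.
- rewrite /Qmx -scalemxAl -scalemxAr scalerA mulmxA -(mulmxA _ _ (Bmx R b k)) BtB.
  rewrite mul_mx_scalar -scalemxAl scalerA -mulrA mulVf ?mulr1 //.
  by rewrite pnatr_eq0 -lt0n.
- by move=> P PB; rewrite /Qmx -scalemxAr mulmxA PB.
Qed.

Lemma info_le b k p t (A : 'M[R]_(b * k, p)) (K : 'M[R]_(p, t)) : (0 < k)%N ->
  \tr (info_mx A K (Bmx R b k)) <=
  \tr ((A *m K *m mpinv (K^T *m K))^T *m (1%:M - Qmx b k) *m (A *m K *m mpinv (K^T *m K))).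
Proof.
move=> k0; rewrite /info_mx /prp.
set X2 := row_mx _ _.
have [PT PP PX] := pr_props X2.
have [QT QQ QP] := Q_props b k0.
apply: proj_le => //; apply: QP.
by move: PX; rewrite /X2 mul_mx_row => /eq_row_mx [].
Qed.

Lemma tr_tmul m n (W : 'M[R]_(m, n)) : \tr (W^T *m W) = \sum_i \sum_j W j i ^+ 2.
Proof. by apply: eq_bigr => i _; rewrite !mxE; apply: eq_bigr => j _; rewrite mxE expr2. Qed.

Lemma trQ b k t (Y : 'M[R]_(b * k, t)) (g : 'I_b -> 'I_k -> 'I_t -> R) :
  (0 < k)%N -> (forall r c, Y r c = g (blk r) (pos r) c) ->
  \tr (Y^T *m (1%:M - Qmx b k) *m Y) =
  \sum_i (\sum_j \sum_c g i j c ^+ 2 - k%:R^-1 * \sum_c (\sum_j g i j c) ^+ 2).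
Proof.
move=> k0 hY.
rewrite mulmxBr mulmx1 mulmxBl linearB /= /Qmx -!scalemxAr -scalemxAl linearZ /=.
have -> : Y^T *m (Bmx R b k *m (Bmx R b k)^T) *m Y = ((Bmx R b k)^T *m Y)^T *m ((Bmx R b k)^T *m Y).
  by rewrite trmx_mul trmxK !mulmxA.
have hBY : forall i c, ((Bmx R b k)^T *m Y) i c = \sum_j g i j c.
  move=> i c; rewrite mxE.
  under eq_bigr do rewrite !mxE hY.
  rewrite (sum_rows (fun x j => (x == i)%:R * g x j c)) (bigD1 i) //= [X in _ + X]big1.
    by rewrite addr0; apply: eq_bigr => j _; rewrite eqxx mul1r.
  by move=> x /negbTE xi; apply: big1 => j _; rewrite xi mul0r.
have eA : \sum_c \sum_r Y r c ^+ 2 = \sum_i \sum_j \sum_c g i j c ^+ 2.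
  rewrite exchange_big /= -(sum_rows (fun i j => \sum_c g i j c ^+ 2)).
  by apply: eq_bigr => r _; apply: eq_bigr => c _; rewrite hY.
have eB : \sum_c \sum_i ((Bmx R b k)^T *m Y) i c ^+ 2 = \sum_i \sum_c (\sum_j g i j c) ^+ 2.
  by rewrite exchange_big; apply: eq_bigr => i _; apply: eq_bigr => c _; rewrite hBY.
by rewrite !tr_tmul eA eB mulr_sumr sumrB.
Qed.

End Sums.

Section Comb.
Variable R : realFieldType.
Variables (t k : nat).
Implicit Types (x y z c : 'I_t).

Lemma ind_sq x c : ((x == c)%:R : R) ^+ 2 = (x == c)%:R.
Proof. by case: (x == c); rewrite ?expr1n ?expr0n. Qed.

Lemma sum_ind x : \sum_c ((x == c)%:R : R) = 1.
Proof.
rewrite (bigD1 x) //= eqxx big1 ?addr0 // => c /negbTE; rewrite eq_sym => ->.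
by [].
Qed.

Lemma sum_ind2 x y : \sum_c ((x == c)%:R * (y == c)%:R : R) = (x == y)%:R.
Proof.
rewrite (bigD1 x) //= eqxx mul1r big1 ?addr0 1?eq_sym // => c /negbTE.
by rewrite eq_sym => ->; rewrite mul0r.
Qed.

Lemma card_setR (P : pred 'I_k) : (#|[set j | P j]|%:R : R) = \sum_j (P j)%:R.
Proof.
rewrite cardsE -sum1_card natr_sum big_mkcond /=.
by apply: eq_bigr => j _; rewrite unfold_in; case: (P j).
Qed.

Lemma nocc_sum (f : 'I_k -> 'I_t) c :
  ((nocc (mktuple f) c)%:R : R) = \sum_j (f j == c)%:R.
Proof.
rewrite /nocc -sum1_count big_tuple natr_sum big_mkcond /=.
by apply: eq_bigr => j _; rewrite tnth_mktuple; case: (f j == c).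
Qed.

Lemma mocc_sum (f : 'I_k -> 'I_t) :
  \sum_c ((mocc (mktuple f) c)%:R : R) = \sum_j (f (ord_pred j) == f j)%:R.
Proof.
under eq_bigr do rewrite /mocc card_setR.
rewrite exchange_big /=; apply: eq_bigr => j _.
rewrite -sum_ind2; apply: eq_bigr => c _.
by rewrite !tnth_mktuple; case: (f (ord_pred j) == c); case: (f j == c); rewrite ?mulr1 ?mulr0.
Qed.

Lemma pocc_sum (f : 'I_k -> 'I_t) :
  \sum_c ((pocc (mktuple f) c)%:R : R) = \sum_j (f (ord_pred j) == f (ordS j))%:R.
Proof.
under eq_bigr do rewrite /pocc card_setR.
rewrite exchange_big /=; apply: eq_bigr => j _.
rewrite -sum_ind2; apply: eq_bigr => c _.
by rewrite !tnth_mktuple; case: (f (ord_pred j) == c); case: (f (ordS j) == c); rewrite ?mulr1 ?mulr0.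
Qed.

Lemma sum_pred (F : 'I_k -> R) : \sum_j F (ord_pred j) = \sum_j F j.
Proof. by rewrite (reindex_inj (@ordS_inj k)); apply: eq_bigr => j _; rewrite ordSK. Qed.

Lemma sum_succ (F : 'I_k -> R) : \sum_j F (ordS j) = \sum_j F j.
Proof. by rewrite (reindex_inj (@ord_pred_inj k)); apply: eq_bigr => j _; rewrite ord_predK. Qed.

Lemma sq2 x y (h : R) :
  \sum_c (h * ((x == c)%:R + (y == c)%:R)) ^+ 2 = h ^+ 2 * (2 + 2 * (x == y)%:R).
Proof.
transitivity (\sum_c h ^+ 2 * ((x == c)%:R + (y == c)%:R + 2 * ((x == c)%:R * (y == c)%:R))).
  apply: eq_bigr => c _.
  rewrite -[X in _ = _ * (X + _ + _)]ind_sq -[X in _ = _ * (_ + X + _)]ind_sq; ring.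
rewrite -mulr_sumr !big_split /= -mulr_sumr !sum_ind sum_ind2; ring.
Qed.

Lemma sq3 x y z (h : R) :
  \sum_c (h * ((x == c)%:R + (y == c)%:R + (z == c)%:R)) ^+ 2 =
  h ^+ 2 * (3 + 2 * ((x == y)%:R + (x == z)%:R + (y == z)%:R)).
Proof.
transitivity (\sum_c h ^+ 2 * ((x == c)%:R + (y == c)%:R + (z == c)%:R
   + 2 * ((x == c)%:R * (y == c)%:R) + 2 * ((x == c)%:R * (z == c)%:R)
   + 2 * ((y == c)%:R * (z == c)%:R))).
  apply: eq_bigr => c _.
  rewrite -[X in _ = _ * (X + _ + _ + _ + _ + _)]ind_sq.
  rewrite -[X in _ = _ * (_ + X + _ + _ + _ + _)]ind_sq.
  rewrite -[X in _ = _ * (_ + _ + X + _ + _ + _)]ind_sq; ring.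
rewrite -mulr_sumr !big_split /= -!mulr_sumr !sum_ind !sum_ind2; ring.
Qed.

Lemma block1 (f : 'I_k -> 'I_t) : (0 < k)%N ->
  \sum_j \sum_c (2^-1 * ((f j == c)%:R + (f (ord_pred j) == c)%:R)) ^+ 2
  - k%:R^-1 * \sum_c (\sum_j 2^-1 * ((f j == c)%:R + (f (ord_pred j) == c)%:R)) ^+ 2
  = cval (mktuple f) R.
Proof.
move=> k0.
have kn0 : (k%:R : R) != 0 by rewrite pnatr_eq0 -lt0n.
under eq_bigr do rewrite sq2.
under [X in _ - _ * X]eq_bigr => c _ do rewrite -mulr_sumr big_split /= (sum_pred (fun i => (f i == c)%:R)) -nocc_sum.
rewrite -mulr_sumr big_split /= sumr_const card_ord -mulr_sumr.
have hm : \sum_i ((f i == f (ord_pred i))%:R : R) = \sum_c (mocc (mktuple f) c)%:R.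
  by rewrite mocc_sum; apply: eq_bigr => i _; rewrite eq_sym.
have hn : \sum_c (2^-1 * (((nocc (mktuple f) c)%:R : R) + (nocc (mktuple f) c)%:R)) ^+ 2
   = \sum_c (nocc (mktuple f) c)%:R ^+ 2.
  by apply: eq_bigr => c _; field.
rewrite hm hn /cval.
set N2 := \sum_c _ ^+ 2; set M := \sum_c _.
by rewrite -mulr_natr; field.
Qed.


Lemma block2 (f : 'I_k -> 'I_t) : (0 < k)%N ->
  \sum_j \sum_c (3^-1 * ((f j == c)%:R + (f (ord_pred j) == c)%:R + (f (ordS j) == c)%:R)) ^+ 2
  - k%:R^-1 * \sum_c (\sum_j 3^-1 * ((f j == c)%:R + (f (ord_pred j) == c)%:R
                                      + (f (ordS j) == c)%:R)) ^+ 2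
  = ctval (mktuple f) R.
Proof.
move=> k0.
have kn0 : (k%:R : R) != 0 by rewrite pnatr_eq0 -lt0n.
under eq_bigr do rewrite sq3.
under [X in _ - _ * X]eq_bigr => c _ do rewrite -mulr_sumr !big_split /=
  (sum_pred (fun i => (f i == c)%:R)) (sum_succ (fun i => (f i == c)%:R)) -nocc_sum.
rewrite -mulr_sumr big_split /= sumr_const card_ord -mulr_sumr !big_split /=.
have hm : \sum_i ((f i == f (ord_pred i))%:R : R) = \sum_c (mocc (mktuple f) c)%:R.
  by rewrite mocc_sum; apply: eq_bigr => i _; rewrite eq_sym.
have hm2 : \sum_i ((f i == f (ordS i))%:R : R) = \sum_c (mocc (mktuple f) c)%:R.
  rewrite mocc_sum -(sum_pred (fun i => (f i == f (ordS i))%:R)).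
  by apply: eq_bigr => i _; rewrite ord_predK.
have hp : \sum_i ((f (ord_pred i) == f (ordS i))%:R : R) = \sum_c (pocc (mktuple f) c)%:R.
  by rewrite pocc_sum.
have hn : \sum_c (3^-1 * (((nocc (mktuple f) c)%:R : R) + (nocc (mktuple f) c)%:R
            + (nocc (mktuple f) c)%:R)) ^+ 2
   = \sum_c (nocc (mktuple f) c)%:R ^+ 2.
  by apply: eq_bigr => c _; field.
rewrite hm hm2 hp hn /ctval.
set N2 := \sum_c _ ^+ 2; set M := \sum_c (mocc _ _)%:R; set P := \sum_c _.
by rewrite -mulr_natr; field.
Qed.
End Comb.
Section Main.
Variable R : realFieldType.

Lemma mpinv_scalar q (a : R) : a != 0 -> mpinv (a%:M : 'M[R]_q) = a^-1%:M.
Proof.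
move=> a0; have [h1 _ _ _] := mpinvP (a%:M : 'M[R]_q).
move: h1; rewrite mul_scalar_mx -scalemxAl mul_mx_scalar scalerA => h.
have := congr1 (fun M => (a * a)^-1 *: M) h.
rewrite scalerA mulVf ?mulf_neq0 // scale1r => ->.
by rewrite -mul_scalar_mx -scalar_mxM invfM -mulrA mulVf // mulr1.
Qed.

Lemma empty_mx b p (M : 'M[R]_(b * 0, p)) : M = 0.
Proof. by apply/matrixP => -[r hr] c; exfalso; move: hr; rewrite muln0. Qed.

Lemma tr_info0 b t p (A : 'M[R]_(b * 0, p)) (K : 'M[R]_(p, t)) :
  \tr (info_mx A K (Bmx R b 0)) = 0.
Proof.
rewrite /info_mx.
by rewrite (empty_mx (A *m K *m _)) trmx0 mul0mx mul0mx linear0.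
Qed.

Lemma cval0 t (l : 0.-tuple 'I_t) : 0 <= cval l R /\ 0 <= ctval l R.
Proof.
have hm : forall i, mocc l i = 0%N.
  by move=> i; rewrite /mocc; apply: eq_card0 => -[m hm0]; exfalso; move: hm0; rewrite ltn0.
have hp : forall i, pocc l i = 0%N.
  by move=> i; rewrite /pocc; apply: eq_card0 => -[m hm0]; exfalso; move: hm0; rewrite ltn0.
rewrite /cval /ctval invr0 !mulr0 mul0r !subr0.
have Hm : 0 <= \sum_i ((mocc l i)%:R : R) by apply: sumr_ge0 => i _; exact: ler0n.
have Hp : 0 <= \sum_i ((pocc l i)%:R : R) by apply: sumr_ge0 => i _; exact: ler0n.
by split; apply: mulr_ge0; lra.
Qed.
End Main.

Lemma KtK2 (R : realFieldType) t :
  (col_mx (1%:M : 'M[R]_t) 1%:M)^T *m col_mx 1%:M 1%:M = (2 : R)%:M.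
Proof.
rewrite tr_col_mx trmx1 mul_row_col !mulmx1.
apply/matrixP => i j; rewrite !mxE; case: (i == j); rewrite ?mulr1n ?mulr0n ?addr0 //.
Qed.

Lemma KtK3 (R : realFieldType) t :
  (col_mx (col_mx (1%:M : 'M[R]_t) 1%:M) 1%:M)^T *m col_mx (col_mx 1%:M 1%:M) 1%:M = (3 : R)%:M.
Proof.
rewrite tr_col_mx mul_row_col KtK2 trmx1 mulmx1.
apply/matrixP => i j; rewrite !mxE; case: (i == j); rewrite ?mulr1n ?mulr0n ?addr0 //; ring.
Qed.

Unset Implicit Arguments.
Theorem proposition8 (R : realFieldType) (t b k : nat) (d : design t b k) :
  (forall lstar : k.-tuple 'I_t,
     (forall l : k.-tuple 'I_t, cval l R <= cval lstar R) ->
     \tr (C_phi R d) <= b%:R * cval lstar R) /\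
  (forall lstar : k.-tuple 'I_t,
     (forall l : k.-tuple 'I_t, ctval l R <= ctval lstar R) ->
     \tr (C_psi R d) <= b%:R * ctval lstar R).
Proof.
case: (posnP k) => [k0|kpos].
  subst k; split => lstar _; rewrite ?/C_phi ?/C_psi tr_info0;
  have [h1 h2] := cval0 R lstar; apply: mulr_ge0 => //; exact: ler0n.
split => lstar Hl.
  rewrite /C_phi; apply: le_trans (info_le _ _ kpos) _.
  rewrite KtK2 mpinv_scalar ?pnatr_eq0 //.
  rewrite (@trQ _ _ _ _ _ (fun i j c => 2^-1 * ((d i j == c)%:R + (d i (ord_pred j) == c)%:R))) //;
    last first.
    by move=> r c; rewrite mul_row_col !mulmx1 mul_mx_scalar !mxE.
  under eq_bigr => i _ do rewrite (@block1 R t k (d i) kpos).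
  have -> : b%:R * cval lstar R = \sum_(i < b) cval lstar R by rewrite sumr_const card_ord mulr_natl.
  by apply: ler_sum => i _; exact: Hl.
rewrite /C_psi; apply: le_trans (info_le _ _ kpos) _.
rewrite KtK3 mpinv_scalar ?pnatr_eq0 //.
rewrite (@trQ _ _ _ _ _ (fun i j c => 3^-1 * ((d i j == c)%:R + (d i (ord_pred j) == c)%:R
                                                + (d i (ordS j) == c)%:R))) //;
  last first.
  by move=> r c; rewrite !mul_row_col !mulmx1 mul_mx_scalar !mxE.
under eq_bigr => i _ do rewrite (@block2 R t k (d i) kpos).
have -> : b%:R * ctval lstar R = \sum_(i < b) ctval lstar R by rewrite sumr_const card_ord mulr_natl.
by apply: ler_sum => i _; exact: Hl.
Qed.
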